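(* Let $L$ be a Stonean locale and $\nu:L\to\mathbb{R}$ a real normal valuation. Let $\nu_+$ (resp. $\nu_-$) be the supremum of all $a\in L$ such that $\nu$ (resp. $-\nu$) restricted to $\{b\in L:b\le a\}$ takes only nonnegative values. Then: an element $a\in L$ satisfies this condition for $\nu$ (resp. $-\nu$) if and only if $a\le\nu_+$ (resp. $a\le\nu_-$); $\nu_+\vee\nu_-=1$; $\nu_+\wedge\nu_-$ is the largest $a\in L$ such that $\nu$ vanishes on $\{b:b\le a\}$; and the maps $\nu^+(x)=\nu(\nu_+\wedge x)$ and $\nu^-(x)=-\nu(\nu_-\wedge x)$ are positive normal valuations on $L$ with $\nu=\nu^+-\nu^-$. The same statements hold when $\nu:L\to\mathbb{R}$ is a real continuous valuation on a Boolean locale $L$ (a complete Boolean algebra).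
   Context: Frames/locales: a frame is a poset with finite meets and arbitrary joins with binary meets distributing over joins; $\neg x=\sup\{w:w\wedge x=0\}$. Compact open: $a$ with $\bigvee S\ge a\Rightarrow\bigvee F\ge a$ for some finite $F\subset S$. A Stonean locale is coherent (compact opens closed under finite meets including $1$, every element a join of compact opens), regular ($y=\bigvee\{x:\neg x\vee y=1\}$), and extremally disconnected ($\neg x\vee\neg\neg x=1$). A real valuation is $\nu:L\to\mathbb{R}$ with $\nu(0)=0$ and $\nu(x)+\nu(y)=\nu(x\vee y)+\nu(x\wedge y)$; it is continuous if $\nu(\sup I)=\lim_{x\in I}\nu(x)$ for every directed $I$; normal if in addition $\nu(\neg\neg a)=\nu(a)$. A positive valuation takes values in $[0,\infty)$ (and is monotone). *)

(* Defs.v *)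
From Stdlib Require Import Reals List.
Open Scope R_scope.

Record frame := Frame {
  car :> Type;
  le : car -> car -> Prop;
  le_refl : forall x, le x x;
  le_trans : forall x y z, le x y -> le y z -> le x z;
  le_antisym : forall x y, le x y -> le y x -> x = y;
  meet : car -> car -> car;
  top : car;
  sup : (car -> Prop) -> car;
  meet_glb : forall x y z, le z (meet x y) <-> (le z x /\ le z y);
  top_max : forall x, le x top;
  sup_lub : forall (S : car -> Prop) z, le (sup S) z <-> (forall s, S s -> le s z);
  meet_sup_distr : forall x (S : car -> Prop),
      meet x (sup S) = sup (fun y => exists s, S s /\ y = meet x s)
}.

Arguments le {f}.
Arguments meet {f}.
Arguments top {f}.
Arguments sup {f}.

Section FrameDefs.
Variable L : frame.

Definition bot : L := sup (fun _ : L => False).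
Definition join (x y : L) : L := sup (fun z => z = x \/ z = y).

Definition neg (x : L) : L := sup (fun w => meet w x = bot).

Definition compact (a : L) : Prop :=
  forall S : L -> Prop, le a (sup S) ->
    exists F : list L, (forall s, In s F -> S s) /\ le a (sup (fun z => In z F)).

Definition coherent : Prop :=
  compact top /\
  (forall a b : L, compact a -> compact b -> compact (meet a b)) /\
  (forall x : L, x = sup (fun c => compact c /\ le c x)).

Definition regular : Prop :=
  forall y : L, y = sup (fun x => join (neg x) y = top).

Definition extremally_disconnected : Prop :=
  forall x : L, join (neg x) (neg (neg x)) = top.

Definition stonean : Prop := coherent /\ regular /\ extremally_disconnected.

Definition boolean_locale : Prop := forall x : L, join x (neg x) = top.

Definition valuation (nu : L -> R) : Prop :=
  nu bot = 0 /\ forall x y, nu x + nu y = nu (join x y) + nu (meet x y).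

Definition directed (I : L -> Prop) : Prop :=
  (exists x, I x) /\
  forall x y, I x -> I y -> exists z, I z /\ le x z /\ le y z.

(* nu (sup I) is the limit of the net (nu x)_{x in I}, I ordered by le *)
Definition continuous_valuation (nu : L -> R) : Prop :=
  valuation nu /\
  forall I : L -> Prop, directed I ->
    forall eps, 0 < eps -> exists x0, I x0 /\
      forall x, I x -> le x0 x -> Rabs (nu x - nu (sup I)) < eps.

Definition normal_valuation (nu : L -> R) : Prop :=
  continuous_valuation nu /\ forall a, nu (neg (neg a)) = nu a.

Definition positive_valuation (nu : L -> R) : Prop :=
  valuation nu /\ (forall x, 0 <= nu x) /\ (forall x y, le x y -> nu x <= nu y).

Definition nonneg_below (nu : L -> R) (a : L) : Prop :=
  forall b, le b a -> 0 <= nu b.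

Definition nu_plus (nu : L -> R) : L := sup (nonneg_below nu).
Definition nu_minus (nu : L -> R) : L := sup (nonneg_below (fun x => - nu x)).

End FrameDefs.

Arguments bot {L}.
Arguments join {L}.
Arguments neg {L}.
Arguments nu_plus {L}.
Arguments nu_minus {L}.
Arguments nonneg_below {L}.

(* Main.v *)
From Stdlib Require Import Reals Lra Lia Arith Wf_nat Classical IndefiniteDescription.
Require Import Defs.
Open Scope R_scope.

Section FrameLemmas.
Context {L : frame}.

Lemma lrefl (x : L) : le x x. Proof. exact (le_refl L x). Qed.
Lemma ltrans (x y z : L) : le x y -> le y z -> le x z. Proof. exact (le_trans L x y z). Qed.
Lemma lanti (x y : L) : le x y -> le y x -> x = y. Proof. exact (le_antisym L x y). Qed.
Lemma le_sup (S : L -> Prop) s : S s -> le s (sup S).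
Proof. intros H. exact (proj1 (sup_lub L S (sup S)) (lrefl _) s H). Qed.
Lemma sup_le (S : L -> Prop) z : (forall s, S s -> le s z) -> le (sup S) z.
Proof. exact (proj2 (sup_lub L S z)). Qed.
Lemma meet_l (x y : L) : le (meet x y) x.
Proof. exact (proj1 (proj1 (meet_glb L x y (meet x y)) (lrefl _))). Qed.
Lemma meet_r (x y : L) : le (meet x y) y.
Proof. exact (proj2 (proj1 (meet_glb L x y (meet x y)) (lrefl _))). Qed.
Lemma le_meet (x y z : L) : le z x -> le z y -> le z (meet x y).
Proof. intros; apply (proj2 (meet_glb L x y z)); auto. Qed.
Lemma le_top (x : L) : le x top. Proof. exact (top_max L x). Qed.
Lemma bot_le (x : L) : le bot x. Proof. unfold bot; apply sup_le; intros s []. Qed.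
Lemma le_bot (x : L) : le x bot -> x = bot. Proof. intro; apply lanti; auto using bot_le. Qed.
Lemma join_l (x y : L) : le x (join x y). Proof. unfold join; apply le_sup; left; reflexivity. Qed.
Lemma join_r (x y : L) : le y (join x y). Proof. unfold join; apply le_sup; right; reflexivity. Qed.
Lemma join_le (x y z : L) : le x z -> le y z -> le (join x y) z.
Proof. intros. unfold join; apply sup_le; intros s [-> | ->]; auto. Qed.

Ltac mle := first [ apply lrefl | assumption | apply le_meet; mle
  | eapply ltrans; [apply meet_l|]; mle | eapply ltrans; [apply meet_r|]; mle ].

Lemma meet_comm (x y : L) : meet x y = meet y x. Proof. apply lanti; mle. Qed.
Lemma meet_assoc (x y z : L) : meet (meet x y) z = meet x (meet y z). Proof. apply lanti; mle. Qed.
Lemma meet_eq_l (x y : L) : le x y -> meet x y = x.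
Proof. intros; apply lanti; mle. Qed.
Lemma meet_top (x : L) : meet x top = x. Proof. apply meet_eq_l, le_top. Qed.
Lemma meet_mono (x y x' y' : L) : le x x' -> le y y' -> le (meet x y) (meet x' y').
Proof. intros. apply le_meet; eapply ltrans; [apply meet_l| |apply meet_r|]; auto. Qed.

Lemma meet_join_distr (x y z : L) : meet x (join y z) = join (meet x y) (meet x z).
Proof.
  unfold join. rewrite (meet_sup_distr L). apply lanti; apply sup_le; intros s Hs.
  - destruct Hs as [t [[-> | ->] ->]]; apply le_sup; [left|right]; reflexivity.
  - destruct Hs as [-> | ->]; apply le_sup; eexists; split; [left; reflexivity | reflexivity
      | right; reflexivity | reflexivity].
Qed.

Lemma neg_meet_l (x : L) : meet (neg x) x = bot.
Proof.
  rewrite meet_comm. unfold neg. rewrite (meet_sup_distr L). apply le_bot. apply sup_le.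
  intros s [w [Hw ->]]. rewrite meet_comm, Hw. apply lrefl.
Qed.
Lemma neg_meet_r (x : L) : meet x (neg x) = bot.
Proof. rewrite meet_comm; apply neg_meet_l. Qed.
Lemma le_neg (y x : L) : meet y x = bot -> le y (neg x).
Proof. intros; unfold neg; apply le_sup; auto. Qed.
Lemma neg_anti (x y : L) : le x y -> le (neg y) (neg x).
Proof.
  intros. apply le_neg, le_bot. rewrite <- (neg_meet_l y). mle.
Qed.
Lemma le_negneg (x : L) : le x (neg (neg x)).
Proof. apply le_neg, neg_meet_r. Qed.
Lemma neg_bot : neg (@bot L) = top.
Proof. apply lanti; [apply le_top|]. apply le_neg, le_bot, meet_r. Qed.

Lemma negneg_meet (x y : L) : neg (neg (meet x y)) = meet (neg (neg x)) (neg (neg y)).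
Proof.
  apply lanti.
  - apply le_meet; do 2 apply neg_anti; mle.
  - apply le_neg. apply le_bot. set (w := neg (meet x y)).
    assert (Ha : le (meet w x) (neg y)).
    { apply le_neg. apply le_bot. rewrite <- (neg_meet_l (meet x y)). mle. }
    assert (Hc : le (meet w (neg (neg y))) (neg x)).
    { apply le_neg. apply le_bot. rewrite <- (neg_meet_r (neg y)).
      apply le_meet; [|mle]. eapply ltrans; [|exact Ha]. mle. }
    rewrite <- (neg_meet_r (neg x)).
    apply le_meet; [|mle]. eapply ltrans; [|exact Hc]. mle.
Qed.

Lemma neg_em (a : L) : neg (join a (neg a)) = bot.
Proof.
  apply le_bot. rewrite <- (neg_meet_r (neg a)).
  apply le_meet; apply neg_anti; [apply join_l | apply join_r].
Qed.
Lemma negneg_em (a : L) : neg (neg (join a (neg a))) = top.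
Proof. rewrite neg_em; apply neg_bot. Qed.

End FrameLemmas.

Ltac mle := first [ apply lrefl | assumption | apply le_meet; mle
  | eapply ltrans; [apply meet_l|]; mle | eapply ltrans; [apply meet_r|]; mle ].

Section Val.
Context {L : frame} (mu : L -> R) (Hnv : normal_valuation L mu).

Lemma Hv : valuation L mu. Proof. exact (proj1 (proj1 Hnv)). Qed.
Lemma Hc : forall I : L -> Prop, directed L I ->
    forall eps, 0 < eps -> exists x0, I x0 /\
      forall x, I x -> le x0 x -> Rabs (mu x - mu (sup I)) < eps.
Proof. exact (proj2 (proj1 Hnv)). Qed.
Lemma Hn : forall a, mu (neg (neg a)) = mu a. Proof. exact (proj2 Hnv). Qed.

Lemma mu_bot : mu bot = 0. Proof. exact (proj1 Hv). Qed.
Lemma mu_disj (x y : L) : meet x y = bot -> mu (join x y) = mu x + mu y.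
Proof. intros H. pose proof (proj2 Hv x y). rewrite H, mu_bot in H0. lra. Qed.
Lemma mu_le_bot (x : L) : le x bot -> mu x = 0.
Proof. intros H; rewrite (le_bot _ H); apply mu_bot. Qed.

Lemma N1 (d a : L) : mu d = mu (meet d a) + mu (meet d (neg a)).
Proof.
  rewrite <- mu_disj.
  - rewrite <- meet_join_distr. rewrite <- (Hn (meet d (join a (neg a)))).
    rewrite negneg_meet, negneg_em, meet_top, Hn. reflexivity.
  - apply le_bot. rewrite <- (neg_meet_r a). mle.
Qed.

Lemma lim_ge (I : L -> Prop) r : directed L I -> (forall x, I x -> r <= mu x) -> r <= mu (sup I).
Proof.
  intros HI H. destruct (Rle_or_lt r (mu (sup I))) as [|Hlt]; auto. exfalso.
  destruct (Hc I HI (r - mu (sup I))) as [x0 [Hx0 Hlim]]; [lra|].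
  specialize (Hlim x0 Hx0 (lrefl _)). apply Rabs_def2 in Hlim. specialize (H x0 Hx0). lra.
Qed.
Lemma lim_le (I : L -> Prop) r : directed L I -> (forall x, I x -> mu x <= r) -> mu (sup I) <= r.
Proof.
  intros HI H. destruct (Rle_or_lt (mu (sup I)) r) as [|Hlt]; auto. exfalso.
  destruct (Hc I HI (mu (sup I) - r)) as [x0 [Hx0 Hlim]]; [lra|].
  specialize (Hlim x0 Hx0 (lrefl _)). apply Rabs_def2 in Hlim. specialize (H x0 Hx0). lra.
Qed.

Lemma directed_meet (I : L -> Prop) (c : L) : directed L I ->
  directed L (fun y => exists s, I s /\ y = meet c s).
Proof.
  intros [[x Hx] Hd]. split.
  - exists (meet c x); eauto.
  - intros y1 y2 [s1 [H1 ->]] [s2 [H2 ->]]. destruct (Hd s1 s2 H1 H2) as [z [Hz [Hz1 Hz2]]].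
    exists (meet c z). split; eauto. split; apply meet_mono; auto using lrefl.
Qed.

Lemma pos_down a b : nonneg_below mu a -> le b a -> nonneg_below mu b.
Proof. intros Ha Hb c Hc'. apply Ha. eapply ltrans; eauto. Qed.
Lemma pos_bot : nonneg_below mu bot.
Proof. intros b Hb. rewrite (mu_le_bot b Hb). lra. Qed.
Lemma pos_join a b : nonneg_below mu a -> nonneg_below mu b -> nonneg_below mu (join a b).
Proof.
  intros Ha Hb c Hc'. rewrite (N1 c a).
  assert (0 <= mu (meet c a)) by (apply Ha; apply meet_r).
  assert (0 <= mu (meet c (neg a))).
  { apply Hb. eapply ltrans with (meet (neg a) (join a b)).
    - apply le_meet; [apply meet_r| eapply ltrans; [apply meet_l| exact Hc']].
    - rewrite meet_join_distr, neg_meet_l. apply join_le; [apply bot_le | apply meet_r]. }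
  lra.
Qed.
Lemma pos_sup_dir (I : L -> Prop) : directed L I -> (forall x, I x -> nonneg_below mu x) ->
  nonneg_below mu (sup I).
Proof.
  intros HI HP c Hc'. rewrite <- (meet_eq_l c (sup I) Hc'). rewrite (meet_sup_distr L).
  apply lim_ge. apply directed_meet; auto.
  intros y [s [Hs ->]]. apply (HP s Hs). apply meet_r.
Qed.
Lemma plus_pos : nonneg_below mu (nu_plus mu).
Proof.
  unfold nu_plus. apply pos_sup_dir; auto. split.
  - exists bot; apply pos_bot.
  - intros x y Hx Hy; exists (join x y); split; [apply pos_join; auto | split; [apply join_l|apply join_r]].
Qed.
Lemma nonneg_iff a : nonneg_below mu a <-> le a (nu_plus mu).
Proof.
  split.
  - intro; unfold nu_plus; apply le_sup; auto.
  - intro; apply pos_down with (nu_plus mu); auto using plus_pos.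
Qed.
Lemma plus_reg : neg (neg (nu_plus mu)) = nu_plus mu.
Proof.
  apply lanti; [|apply le_negneg]. apply nonneg_iff. intros b Hb.
  rewrite (N1 b (nu_plus mu)). rewrite (mu_le_bot (meet b (neg (nu_plus mu)))).
  - rewrite Rplus_0_r. apply plus_pos; apply meet_r.
  - rewrite <- (neg_meet_l (neg (nu_plus mu))). mle.
Qed.

Definition W (x : L) (m : nat) : Prop := exists e, le e x /\ mu e < - / (INR m + 1).

Lemma choose_ex (x : L) : exists e, le e x /\ mu e <= 0 /\
  (forall m, W x m -> mu e < - / (INR m + 1)).
Proof.
  destruct (classic (exists m, W x m)) as [[m Hm] | Hno].
  - revert Hm. induction m as [m IH] using (well_founded_ind lt_wf). intros Hm.
    destruct (classic (exists m', (m' < m)%nat /\ W x m')) as [[m' [Hlt Hm']] | Hmin].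
    + exact (IH m' Hlt Hm').
    + destruct Hm as [e [Hex Hmu]]. exists e. split; [exact Hex|]. split.
      * assert (0 < / (INR m + 1)) by (apply Rinv_0_lt_compat; pose proof (pos_INR m); lra). lra.
      * intros m0 Hm0. assert (Hle : (m <= m0)%nat).
        { destruct (le_lt_dec m m0); auto. exfalso; apply Hmin; eauto. }
        assert (/ (INR m0 + 1) <= / (INR m + 1)).
        { apply Rinv_le_contravar. pose proof (pos_INR m); lra. apply le_INR in Hle; lra. }
        lra.
  - exists bot. split; [apply bot_le|]. rewrite mu_bot. split; [lra|]. intros m Hm; exfalso; eauto.
Qed.

Definition ch (x : L) : L := proj1_sig (constructive_indefinite_description _ (choose_ex x)).
Lemma ch_spec x : le (ch x) x /\ mu (ch x) <= 0 /\
  (forall m, W x m -> mu (ch x) < - / (INR m + 1)).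
Proof. unfold ch; destruct (constructive_indefinite_description _ _) as [e He]; exact He. Qed.

Section Seq.
Variable c : L.
Fixpoint xs (k : nat) : L := match k with O => c | S k' => meet (xs k') (neg (ch (xs k'))) end.
Fixpoint Es (k : nat) : L := match k with O => bot | S k' => join (Es k') (ch (xs k')) end.

Lemma es_le k : le (ch (xs k)) (xs k). Proof. exact (proj1 (ch_spec _)). Qed.
Lemma xs_le_c k : le (xs k) c.
Proof. induction k; cbn [xs]; [apply lrefl| eapply ltrans; [apply meet_l|exact IHk]]. Qed.
Lemma xs_neg k : le (xs k) (neg (Es k)).
Proof.
  induction k; cbn [xs Es].
  - apply le_neg. apply le_bot, meet_r.
  - apply le_neg. apply le_bot. rewrite meet_join_distr. apply join_le.
    + eapply ltrans with (meet (neg (Es k)) (Es k)).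
      * apply meet_mono; [eapply ltrans; [apply meet_l|exact IHk] | apply lrefl].
      * rewrite neg_meet_l; apply lrefl.
    + eapply ltrans with (meet (neg (ch (xs k))) (ch (xs k))).
      * apply meet_mono; [apply meet_r | apply lrefl].
      * rewrite neg_meet_l; apply lrefl.
Qed.
Lemma Es_le_c k : le (Es k) c.
Proof.
  induction k; cbn [Es]; [apply bot_le|].
  apply join_le; auto. eapply ltrans; [apply es_le|apply xs_le_c].
Qed.
Lemma Es_step k : mu (Es (S k)) = mu (Es k) + mu (ch (xs k)).
Proof.
  cbn [Es]. apply mu_disj. apply le_bot.
  eapply ltrans with (meet (Es k) (neg (Es k))).
  - apply meet_mono; [apply lrefl| eapply ltrans; [apply es_le| apply xs_neg]].
  - rewrite neg_meet_r; apply lrefl.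
Qed.
Lemma Es_nonpos k : mu (Es k) <= 0.
Proof.
  induction k; [cbn [Es]; rewrite mu_bot; lra|].
  rewrite Es_step. pose proof (proj1 (proj2 (ch_spec (xs k)))). lra.
Qed.
Lemma Es_mono i j : (i <= j)%nat -> le (Es i) (Es j).
Proof.
  induction 1; [apply lrefl|]. eapply ltrans; [exact IHle|]. cbn [Es]. apply join_l.
Qed.
Definition Ifam := fun y => exists k, y = Es k.
Lemma Ifam_dir : directed L Ifam.
Proof.
  split.
  - exists (Es 0); unfold Ifam; eauto.
  - intros x y [i ->] [j ->]. exists (Es (max i j)). split; [unfold Ifam; eauto|].
    split; apply Es_mono; lia.
Qed.
Definition E := sup Ifam.
Lemma E_nonpos : mu E <= 0.
Proof. apply lim_le; [apply Ifam_dir|]. intros x [k ->]. apply Es_nonpos. Qed.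
Lemma E_le_c : le E c.
Proof. apply sup_le. intros s [k ->]. apply Es_le_c. Qed.
Definition dd := meet c (neg E).
Lemma d_mu : mu c <= mu dd.
Proof.
  pose proof (N1 c E). rewrite (meet_comm c E), (meet_eq_l E c E_le_c) in H.
  unfold dd. pose proof E_nonpos. lra.
Qed.
Lemma below_d_xs b : le b dd -> forall k, le b (xs k).
Proof.
  intros Hb. induction k; cbn [xs].
  - eapply ltrans; [exact Hb|apply meet_l].
  - apply le_meet; auto. apply le_neg. apply le_bot.
    eapply ltrans with (meet (neg E) E).
    + apply meet_mono.
      * eapply ltrans; [exact Hb| apply meet_r].
      * eapply ltrans with (Es (S k)); [cbn [Es]; apply join_r | unfold E; apply le_sup; exists (S k); reflexivity].
    + rewrite neg_meet_l; apply lrefl.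
Qed.
Lemma d_pos : nonneg_below mu dd.
Proof.
  intros b Hb. destruct (Rle_or_lt 0 (mu b)) as [|Hneg]; auto. exfalso.
  destruct (INR_unbounded (/ (- mu b))) as [m Hm0].
  assert (Hmb : mu b < - / (INR m + 1)).
  { assert (0 < / (- mu b)) by (apply Rinv_0_lt_compat; lra).
    assert (/ (INR m + 1) < / (/ (- mu b))).
    { apply Rinv_lt_contravar. apply Rmult_lt_0_compat; lra. lra. }
    rewrite Rinv_inv in H0. lra. }
  set (q := / (INR m + 1)) in *.
  assert (Hq : 0 < q) by (unfold q; apply Rinv_0_lt_compat; pose proof (pos_INR m); lra).
  assert (Hm : forall k, mu (ch (xs k)) < - q).
  { intro k. apply (proj2 (proj2 (ch_spec (xs k)))). exists b. split; auto. apply below_d_xs; auto. }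
  assert (Hsum : forall k, mu (Es k) <= - (INR k * q)).
  { induction k; [cbn [Es INR]; rewrite mu_bot; lra|].
    rewrite Es_step, S_INR. specialize (Hm k). lra. }
  destruct (Hc Ifam Ifam_dir 1 Rlt_0_1) as [x0 [[k0 ->] Hlim]].
  destruct (INR_archimed q (1 - mu E) Hq) as [N HN].
  specialize (Hlim (Es (N + k0)%nat) (ex_intro _ _ eq_refl) (Es_mono k0 (N + k0) ltac:(lia))).
  apply Rabs_def2 in Hlim. specialize (Hsum (N + k0)%nat).
  assert (INR N <= INR (N + k0)) by (apply le_INR; lia).
  assert (INR N * q <= INR (N + k0) * q) by (apply Rmult_le_compat_r; lra).
  fold E in Hlim. lra.
Qed.
End Seq.

Lemma hahn c : 0 < mu c -> exists d, le d c /\ nonneg_below mu d /\ 0 < mu d.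
Proof.
  intros H. exists (dd c). split; [apply meet_l|]. split; [apply d_pos|].
  pose proof (d_mu c). lra.
Qed.

Lemma neg_plus_negative c : le c (neg (nu_plus mu)) -> mu c <= 0.
Proof.
  intros Hc'. destruct (Rle_or_lt (mu c) 0) as [|H]; auto.
  destruct (hahn c H) as [d [Hdc [Hd Hpos]]]. exfalso.
  assert (le d (meet (nu_plus mu) (neg (nu_plus mu)))).
  { apply le_meet; [apply nonneg_iff; auto | eapply ltrans; eauto]. }
  rewrite neg_meet_r in H0. rewrite (mu_le_bot d H0) in Hpos. lra.
Qed.

Lemma plus_positive : positive_valuation L (fun x => mu (meet (nu_plus mu) x)).
Proof.
  set (p := nu_plus mu). split; [split|split].
  - rewrite (meet_comm p bot), (meet_eq_l bot p (bot_le _)). apply mu_bot.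
  - intros x y. cbv beta. rewrite meet_join_distr. rewrite (proj2 Hv (meet p x) (meet p y)).
    replace (meet (meet p x) (meet p y)) with (meet p (meet x y)); [reflexivity|].
    apply lanti; mle.
  - intros x. apply plus_pos. apply meet_l.
  - intros x y Hxy. rewrite (N1 (meet p y) x).
    replace (meet (meet p y) x) with (meet p x) by (apply lanti; mle).
    assert (0 <= mu (meet (meet p y) (neg x))) by (apply plus_pos; mle). lra.
Qed.

Lemma plus_normal : normal_valuation L (fun x => mu (meet (nu_plus mu) x)).
Proof.
  set (p := nu_plus mu). split; [split|].
  - exact (proj1 plus_positive).
  - intros I HI eps Heps. rewrite (meet_sup_distr L).
    destruct (Hc _ (directed_meet I p HI) eps Heps) as [x0 [[s0 [Hs0 ->]] Hlim]].
    exists s0. split; auto. intros x Hx Hle. apply Hlim; eauto.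
    apply meet_mono; auto using lrefl.
  - intros a. cbv beta. unfold p. rewrite <- plus_reg at 1.
    rewrite <- negneg_meet. apply Hn.
Qed.

End Val.

Lemma opp_normal {L : frame} (nu : L -> R) : normal_valuation L nu ->
  normal_valuation L (fun x => - nu x).
Proof.
  intros Hnv. split; [split; [split|]|].
  - rewrite (mu_bot nu Hnv). lra.
  - intros x y. pose proof (proj2 (Hv nu Hnv) x y). lra.
  - intros I HI eps Heps. destruct (Hc nu Hnv I HI eps Heps) as [x0 [Hx0 Hl]].
    exists x0; split; auto. intros x Hx Hle. specialize (Hl x Hx Hle).
    replace (- nu x - - nu (sup I)) with (- (nu x - nu (sup I))) by ring.
    rewrite Rabs_Ropp; auto.
  - intros a. rewrite (Hn nu Hnv). reflexivity.
Qed.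

Theorem mainTheorem17 (L : frame) (nu : L -> R) :
  ((stonean L /\ normal_valuation L nu) \/
   (boolean_locale L /\ continuous_valuation L nu)) ->
  (forall a : L, nonneg_below nu a <-> le a (nu_plus nu)) /\
  (forall a : L, nonneg_below (fun x => - nu x) a <-> le a (nu_minus nu)) /\
  join (nu_plus nu) (nu_minus nu) = top /\
  ((forall b : L, le b (meet (nu_plus nu) (nu_minus nu)) -> nu b = 0) /\
   (forall a : L, (forall b : L, le b a -> nu b = 0) ->
      le a (meet (nu_plus nu) (nu_minus nu)))) /\
  (positive_valuation L (fun x => nu (meet (nu_plus nu) x)) /\
   normal_valuation L (fun x => nu (meet (nu_plus nu) x))) /\
  (positive_valuation L (fun x => - nu (meet (nu_minus nu) x)) /\
   normal_valuation L (fun x => - nu (meet (nu_minus nu) x))) /\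
  (forall x : L, nu x = nu (meet (nu_plus nu) x) - (- nu (meet (nu_minus nu) x))).
Proof.
  intros H.
  assert (HE : extremally_disconnected L /\ normal_valuation L nu).
  { destruct H as [[[_ [_ Hed]] Hnv] | [Hb Hcv]]; [auto|].
    assert (Hnn : forall x : L, neg (neg x) = x).
    { intros x. apply lanti; [|apply le_negneg].
      rewrite <- (meet_top (neg (neg x))), <- (Hb x), meet_join_distr, neg_meet_l.
      apply join_le; [apply meet_r|apply bot_le]. }
    split.
    - intros x. rewrite Hnn. apply lanti; [apply le_top|]. rewrite <- (Hb x).
      apply join_le; [apply join_r|apply join_l].
    - split; auto. intros a; rewrite Hnn; reflexivity. }
  clear H. destruct HE as [Hed Hnv].
  pose proof (opp_normal nu Hnv) as Hnv'.
  set (p := nu_plus nu). set (n := nu_minus nu).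
  assert (Hnp : le (neg p) n).
  { apply (nonneg_iff _ Hnv'). intros b Hb. pose proof (neg_plus_negative nu Hnv b Hb). lra. }
  assert (Hnull : forall b : L, le b (meet p n) -> nu b = 0).
  { intros b Hb. assert (H1 := proj2 (nonneg_iff nu Hnv b) (ltac:(eapply ltrans; [exact Hb|apply meet_l])) b (lrefl _)).
    assert (H2 := proj2 (nonneg_iff _ Hnv' b) (ltac:(eapply ltrans; [exact Hb|apply meet_r])) b (lrefl _)).
    cbv beta in H2. lra. }
  split; [exact (nonneg_iff nu Hnv)|].
  split; [exact (nonneg_iff _ Hnv')|].
  split.
  { apply lanti; [apply le_top|]. rewrite <- (Hed p). unfold p. rewrite (plus_reg nu Hnv). fold p.
    apply join_le; [eapply ltrans; [exact Hnp|apply join_r] | apply join_l]. }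
  split.
  { split; auto. intros a Ha. apply le_meet.
    - apply (nonneg_iff nu Hnv). intros b Hb. rewrite (Ha b Hb); lra.
    - apply (nonneg_iff _ Hnv'). intros b Hb. rewrite (Ha b Hb); lra. }
  split; [split; [exact (plus_positive nu Hnv) | exact (plus_normal nu Hnv)]|].
  split; [split; [exact (plus_positive _ Hnv') | exact (plus_normal _ Hnv')]|].
  intros x. rewrite (N1 nu Hnv x p). rewrite (N1 nu Hnv (meet n x) p).
  rewrite (Hnull (meet (meet n x) p)) by mle.
  replace (meet (meet n x) (neg p)) with (meet x (neg p)).
  - rewrite (meet_comm x p). lra.
  - apply lanti; [apply le_meet; [apply le_meet; [eapply ltrans; [apply meet_r|exact Hnp]|apply meet_l]|apply meet_r] | mle].
Qed.
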